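(* Let $n\ge 2$ and $q\ge1$ be integers and let $S\subset Q_{q*}^n$ be an $A(n,q,n-1,n-2)$ design. Let $V\subset Q_{q*}^{2n}$ be the set of all concatenations $(s,x)$ with $s\in S$, $x\in Q_q^n$, together with all concatenations $(x,s)$ with $x\in Q_q^n$, $s\in S$. Then $V$ is an $A(2n,q,2n-1,2n-2)$ design.
   Context: For an integer $q\ge1$, $Q_q=\{0,1,\dots,q-1\}$ and $Q_{q*}=Q_q\cup\{*\}$. The weight of a word $u\in Q_{q*}^n$ is $n$ minus the number of $*$ symbols in $u$. For $u,v\in Q_{q*}^n$ we say $u$ extends $v$ if $u_i=v_i$ for every position $i$ with $v_i\neq *$. For integers $n\ge w\ge t\ge 1$, an $A(n,q,w,t)$ design is a set $S$ of words of weight $t$ in $Q_{q*}^n$ such that every word of weight $w$ in $Q_{q*}^n$ extends exactly one element of $S$. *)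

(* Defs.v *)
From mathcomp Require Import all_boot.
Set Implicit Arguments. Unset Strict Implicit. Unset Printing Implicit Defensive.

(* A word of Q_{q*}^n: position i holds [Some a] (a in Q_q) or [None] (= * ). *)
Definition word (n q : nat) := {ffun 'I_n -> option 'I_q}.

Definition weight n q (u : word n q) : nat := #|[set i | u i != None]|.

Definition extends n q (u v : word n q) : bool :=
  [forall i, (v i != None) ==> (u i == v i)].

Definition is_design n q w t (S : {set word n q}) : Prop :=
  (forall s, s \in S -> weight s = t) /\
  (forall u : word n q, weight u = w -> #|[set s in S | extends u s]| = 1).

Definition concat m n q (u : word m q) (v : word n q) : word (m + n) q :=
  [ffun i => match split i with inl j => u j | inr k => v k end].

Definition full n q (x : {ffun 'I_n -> 'I_q}) : word n q := [ffun i => Some (x i)].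

Definition doubled_design n q (S : {set word n q}) : {set word (n + n) q} :=
  [set concat s (full x) | s in S, x in [set: {ffun 'I_n -> 'I_q}]] :|:
  [set concat (full x) s | x in [set: {ffun 'I_n -> 'I_q}], s in S].

(* Main.v *)
Require Import Defs.
From mathcomp Require Import all_boot.
From mathcomp Require Import zify.
Set Implicit Arguments. Unset Strict Implicit.

Definition lft m n q (w : word (m + n) q) : word m q := [ffun j => w (lshift n j)].
Definition rgt m n q (w : word (m + n) q) : word n q := [ffun k => w (rshift m k)].

Lemma concat_lr m n q (w : word (m + n) q) : w = concat (lft w) (rgt w).
Proof.
apply/ffunP => i; rewrite !ffunE.
case E: (split i) => [j|k]; have := splitK i; rewrite E /= => <-; by rewrite ffunE.
Qed.

Lemma extends_concat m n q (a c : word m q) (b d : word n q) :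
  extends (concat a b) (concat c d) = extends a c && extends b d.
Proof.
apply/forallP/andP.
- move=> H; split; apply/forallP => j.
  + by have := H (lshift n j); rewrite !ffunE (unsplitK (inl j)).
  + by have := H (rshift m j); rewrite !ffunE (unsplitK (inr j)).
- move=> [/forallP H1 /forallP H2] i; rewrite !ffunE.
  by case: (split i) => [j|k]; [apply: H1 | apply: H2].
Qed.

Lemma weightE n q (u : word n q) : weight u = \sum_i nat_of_bool (u i != None).
Proof.
rewrite /weight -sum1_card big_mkcond /=; apply eq_bigr => i _; rewrite inE.
by case: (u i != None).
Qed.

Lemma weight_concat m n q (a : word m q) (b : word n q) :
  weight (concat a b) = weight a + weight b.
Proof.
rewrite !weightE big_split_ord /=; congr (_ + _); apply eq_bigr => i _;
  by rewrite ffunE ?(unsplitK (inl i)) ?(unsplitK (inr i)).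
Qed.

Lemma weight_full n q (x : {ffun 'I_n -> 'I_q}) : weight (full x) = n.
Proof.
rewrite weightE (eq_bigr (fun _ => 1)); last by move=> i _; rewrite ffunE.
by rewrite sum1_card card_ord.
Qed.

Lemma weight_le n q (u : word n q) : weight u <= n.
Proof. by rewrite /weight -[X in _ <= X]card_ord max_card. Qed.

Lemma weight_full_ex n q (u : word n q) : 0 < q -> weight u = n ->
  exists x, u = full x.
Proof.
move=> hq hw.
have hA : [set i | u i != None] = setT.
  apply/eqP; rewrite eqEcard subsetT cardsT card_ord /=; rewrite /weight in hw; by rewrite hw.
exists [ffun i => odflt (Ordinal hq) (u i)].
apply/ffunP => i; rewrite !ffunE.
have : i \in [set i | u i != None] by rewrite hA inE.
by rewrite inE; case: (u i).
Qed.

Lemma extends_full_eq n q (u : word n q) x : extends u (full x) -> u = full x.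
Proof.
move/forallP=> H; apply/ffunP => i; have := H i.
by rewrite ffunE /= => /eqP.
Qed.

Lemma extends_refl n q (u : word n q) : extends u u.
Proof. by apply/forallP => i; rewrite eqxx implybT. Qed.

Theorem proposition4 (n q : nat) (S : {set word n q}) :
  2 <= n -> 1 <= q ->
  is_design n.-1 n.-2 S ->
  is_design (n + n).-1 (n + n).-2 (doubled_design S).
Proof.
move=> hn hq [HS1 HS2]; split.
- move=> v; rewrite /doubled_design inE => /orP [/imset2P [s x hs _ ->] | /imset2P [x s _ hs ->]];
  rewrite weight_concat weight_full HS1 //; lia.
- move=> u hu.
  rewrite (concat_lr u) in hu *.
  set a := lft u in hu *; set b := rgt u in hu *.
  rewrite weight_concat in hu.
  have la := weight_le a; have lb := weight_le b.
  have [hb|hb] : (weight b = n /\ weight a = n.-1) \/ (weight a = n /\ weight b = n.-1) by lia.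
  + case: hb => hb ha.
    have [x ->] := weight_full_ex hq hb.
    have /eqP/cards1P [s0 Hs0] := HS2 a ha.
    have : s0 \in [set s in S | extends a s] by rewrite Hs0 set11.
    rewrite inE => /andP [hs0 has0].
    apply/eqP/cards1P; exists (concat s0 (full x)); apply/setP => v; rewrite !inE.
    apply/andP/eqP.
    * move=> -[/orP [/imset2P [s y hs _ ->] | /imset2P [y s _ hs ->]]];
        rewrite extends_concat => /andP [e1 e2].
      -- have hy := extends_full_eq e2. rewrite -hy.
         have : s \in [set s in S | extends a s] by rewrite inE hs e1.
         by rewrite Hs0 inE => /eqP ->.
      -- have := extends_full_eq e1 => ha'; rewrite ha' weight_full in ha; lia.
    * move=> ->; split; last by rewrite extends_concat has0 extends_refl.
      rewrite ?inE; apply/orP; left; apply/imset2P; exists s0 x => //.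
  + case: hb => ha hb.
    have [x ->] := weight_full_ex hq ha.
    have /eqP/cards1P [s0 Hs0] := HS2 b hb.
    have : s0 \in [set s in S | extends b s] by rewrite Hs0 set11.
    rewrite inE => /andP [hs0 hbs0].
    apply/eqP/cards1P; exists (concat (full x) s0); apply/setP => v; rewrite !inE.
    apply/andP/eqP.
    * move=> -[/orP [/imset2P [s y hs _ ->] | /imset2P [y s _ hs ->]]];
        rewrite extends_concat => /andP [e1 e2].
      -- have := extends_full_eq e2 => hb'; rewrite hb' weight_full in hb; lia.
      -- have hy := extends_full_eq e1. rewrite -hy.
         have : s \in [set s in S | extends b s] by rewrite inE hs e2.
         by rewrite Hs0 inE => /eqP ->.
    * move=> ->; split; last by rewrite extends_concat hbs0 extends_refl.
      rewrite ?inE; apply/orP; right; apply/imset2P; exists x s0 => //.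
Qed.
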